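(* Fix an integer $\ell\ge 1$. Then for all $p=O(n)$, $D^p(\textsc{Sub}(C_{2\ell+1}))=\tilde O(n^2/p)$.
   Context: $C_k$ is the cycle on $k$ vertices. Insertion-only streaming model: the edges of an $n$-vertex undirected input graph $G$ arrive as a stream in arbitrary order; the algorithm knows $n$, makes $p$ passes, and has $S$ bits of memory. $\textsc{Sub}(H)$: decide whether $G$ contains $H$ as a subgraph and if so output the vertex set of a copy. $D^p(\Pi)$ is the minimum space of a deterministic $p$-pass streaming algorithm solving $\Pi$. $\tilde O$ hides polylogarithmic factors in $n$. *)

(* Defs.v *)
From mathcomp Require Import all_boot.
Set Implicit Arguments. Unset Strict Implicit. Unset Printing Implicit Defensive.

(* An edge of the stream is an (arbitrarily oriented) pair of vertices of
   the vertex set 'I_n. *)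
Definition edge (n : nat) := ('I_n * 'I_n)%type.

Definition valid_stream (n : nat) (s : seq (edge n)) : bool :=
  all (fun e => e.1 != e.2) s && uniq [seq [set e.1; e.2] | e <- s].

Definition adj (n : nat) (s : seq (edge n)) (u v : 'I_n) : bool :=
  ((u, v) \in s) || ((v, u) \in s).

Definition cycle_copy (k n : nat) (s : seq (edge n)) (f : 'I_k -> 'I_n) : Prop :=
  injective f /\
  forall i j : 'I_k, val j = (val i).+1 %% k -> adj s (f i) (f j).

Definition contains_cycle (k n : nat) (s : seq (edge n)) : Prop :=
  exists f : 'I_k -> 'I_n, cycle_copy s f.

Definition sub_cycle_correct (k n : nat) (s : seq (edge n))
  (ans : option {set 'I_n}) : Prop :=
  match ans with
  | None => ~ contains_cycle k s
  | Some V => exists f : 'I_k -> 'I_n, cycle_copy s f /\ V = f @: setT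
  end.

Definition memory (S : nat) := {ffun 'I_S -> bool}.

(* A deterministic p-pass streaming algorithm on n-vertex graphs (n is
   known, so everything may depend on n) with S bits of memory: an initial
   memory state, a transition function (which may depend on the pass
   number) processing one stream edge, and an output function applied to
   the memory at the end of the last pass. *)
Record stream_alg (n p S : nat) := StreamAlg {
  sa_init : memory S;
  sa_step : 'I_p -> memory S -> edge n -> memory S;
  sa_out  : memory S -> option {set 'I_n}
}.

Definition run_alg (n p S : nat) (A : stream_alg n p S) (s : seq (edge n))
  : option {set 'I_n} :=
  sa_out A (foldl (fun st (j : 'I_p) => foldl (sa_step A j) st s)
                  (sa_init A) (enum 'I_p)).

Definition solves_sub_cycle (k n p S : nat) (A : stream_alg n p S) : Prop :=
  forall s : seq (edge n), valid_stream s -> sub_cycle_correct k s (run_alg A s).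

Definition Dp_sub_cycle_le (k n p S : nat) : Prop :=
  exists A : stream_alg n p S, solves_sub_cycle k A.

(* Submission.v *)
(* Streaming algorithm: store-all for few passes; otherwise batched per-source
   representative-family path search (bounded search tree), giving O(n^2 log n / p) bits. *)
Require Import Defs.
From mathcomp Require Import all_boot.
From mathcomp Require Import zify.
From mathcomp Require Import ring.
From Stdlib Require Import FunctionalExtensionality.
Set Implicit Arguments. Unset Strict Implicit. Unset Printing Implicit Defensive.

Lemma card_setT (T : finType) : #|{: {set T}}| = 2 ^ #|T|.
Proof. have := card_powerset [set: T]; by rewrite powersetT !cardsT. Qed.

Lemma card_mem S : #|{: memory S}| = 2 ^ S.
Proof. by rewrite card_ffun card_bool card_ord. Qed.

Lemma exists_inj (U V : finType) : #|U| <= #|V| -> exists f : U -> V, injective f.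
Proof.
move=> h; exists (fun u => enum_val (widen_ord h (enum_rank u))).
move=> u v /enum_val_inj /(congr1 val) /= /val_inj; exact: enum_rank_inj.
Qed.

Lemma foldl_iota_enum (T : Type) (f : T -> nat -> T) z m :
  foldl (fun t (j : 'I_m) => f t (val j)) z (enum 'I_m) = foldl f z (iota 0 m).
Proof.
rewrite -val_enum_ord; elim: (enum 'I_m) z => //= a l IH z; exact: IH.
Qed.

Section Enc.
Variables (n p S : nat) (St : Type) (U : finType) (code : St -> U) (uncode : U -> St)
  (Inv : St -> Prop) (init : St) (step : nat -> St -> edge n -> St)
  (out : St -> option {set 'I_n}).
Hypothesis codeK : forall t, Inv t -> uncode (code t) = t.
Hypothesis Iinit : Inv init.
Hypothesis Istep : forall j t e, Inv t -> Inv (step j t e).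
Hypothesis cardU : #|U| <= 2 ^ S.

Definition arun (s : seq (edge n)) :=
  foldl (fun t j => foldl (step j) t s) init (iota 0 p).

Lemma encode_alg : exists A : stream_alg n p S, forall s, run_alg A s = out (arun s).
Proof.
have [enc encI] : exists f : U -> memory S, injective f by apply: exists_inj; rewrite card_mem.
pose dec (m : memory S) := odflt (code init) [pick u | enc u == m].
have decK u : dec (enc u) = u.
  rewrite /dec; case: pickP => [v /eqP /encI -> //|/(_ u)]; by rewrite eqxx.
exists (StreamAlg (enc (code init)) (fun j m e => enc (code (step (val j) (uncode (dec m)) e)))
  (fun m => out (uncode (dec m)))) => s.
have H1 j t : Inv t -> Inv (foldl (step j) t s) /\
   foldl (fun m e => enc (code (step j (uncode (dec m)) e))) (enc (code t)) s = enc (code (foldl (step j) t s)).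
  elim: s t => [|e s IH] t It //=.
  by rewrite decK codeK //; apply: IH; apply: Istep.
rewrite /run_alg /arun /=.
have H2 t : Inv t -> foldl (fun st (j : 'I_p) => foldl (fun m e => enc (code (step (val j) (uncode (dec m)) e))) st s) (enc (code t)) (enum 'I_p)
   = enc (code (foldl (fun t j => foldl (step j) t s) t (iota 0 p))).
  rewrite -val_enum_ord; elim: (enum 'I_p) t => [|a l IH] t It //=.
  have [I1 E1] := H1 (val a) t It; rewrite E1; exact: IH.
rewrite H2 // decK codeK //.
have : forall t, Inv t -> Inv (foldl (fun t j => foldl (step j) t s) t (iota 0 p)).
  elim: (iota 0 p) => [|a l IH] t It //=; apply: IH; exact: (H1 a t It).1.
by apply.
Qed.
End Enc.

Section Store.
Variables (k n p : nat).

Definition cycb (E : {set edge n}) (f : {ffun 'I_k -> 'I_n}) :=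
  injectiveb f && [forall i : 'I_k, forall j : 'I_k,
     (val j == (val i).+1 %% k) ==> (((f i, f j) \in E) || ((f j, f i) \in E))].

Definition store_out (E : {set edge n}) : option {set 'I_n} :=
  match [pick f | cycb E f] with Some f => Some (f @: setT) | None => None end.

Lemma cycbP (s : seq (edge n)) (f : {ffun 'I_k -> 'I_n}) :
  cycb [set e in s] f <-> cycle_copy s f.
Proof.
rewrite /cycb /cycle_copy; split.
  case/andP => /injectiveP hi /forallP h; split => // i j hj.
  by move/forallP: (h i) => /(_ j); rewrite hj eqxx /= !inE.
case=> hi h; apply/andP; split; first by apply/injectiveP.
apply/forallP => i; apply/forallP => j; apply/implyP => /eqP hj.
by have := h i j hj; rewrite /adj !inE.
Qed.

Lemma store_correct (hp : 0 < p) :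
  exists A : stream_alg n p (n * n), solves_sub_cycle k A.
Proof.
have cU : #|{: {set edge n}}| <= 2 ^ (n * n) by rewrite card_setT card_prod card_ord.
have [A HA] := @encode_alg n p (n * n) {set edge n} {set edge n} id id (fun _ => True)
  set0 (fun _ E e => e |: E) store_out (fun _ _ => erefl) I (fun _ _ _ _ => I)
  cU.
exists A => s vs; rewrite HA /arun.
have Hf E : foldl (fun E e => e |: E) E s = E :|: [set e in s].
  elim: s E {vs} => [|e s IH] E /=; first by apply/setP => x; rewrite !inE orbF.
  rewrite IH; apply/setP => x; rewrite !inE; by case: (x == e); rewrite ?orbT.
have -> : foldl (fun t j => foldl (fun E e => e |: E) t s) set0 (iota 0 p) = [set e in s].
  case: p hp => // p' _ /=; rewrite Hf set0U.
  elim: (iota 1 p') => //= a l IH; by rewrite Hf setUid.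
rewrite /store_out /sub_cycle_correct; case: pickP => [f hf|hf].
  exists f; split => //; exact/cycbP.
case=> f hcf; have := hf [ffun i => f i]; rewrite (_ : cycb _ _ = true) //.
apply/(cycbP s); case: hcf => hi ha; split.
  by move=> x y; rewrite !ffunE => /hi.
by move=> i j; rewrite !ffunE; apply: ha.
Qed.
End Store.

Section Rep.
Variable T : finType.

Fixpoint rep (q : nat) (s : seq (seq T)) : seq (seq T) :=
  match q with
  | 0 => take 1 s
  | q'.+1 => match s with
     | [::] => [::]
     | a :: _ => a :: flatten [seq rep q' [seq b <- s | x \notin b] | x <- a]
     end
  end.

Fixpoint Rb (m q : nat) : nat := if q is q'.+1 then (m * Rb m q').+1 else 1.

Lemma Rb_gt0 m q : 0 < Rb m q.
Proof. by case: q. Qed.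

Lemma rep_sub q s : {subset rep q s <= s}.
Proof.
elim: q s => [|q IH] s x /=; first by move/mem_take.
case: s => [|a s] //; rewrite inE => /orP [/eqP -> |]; first by rewrite inE eqxx.
case/flatten_mapP => y _ /IH; rewrite mem_filter => /andP [_ ->] //.
Qed.

Lemma rep_size m q s : (forall a, a \in s -> size a <= m) -> size (rep q s) <= Rb m q.
Proof.
elim: q s => [|q IH] s hs /=; first by rewrite size_take; case: (size s) => [|[]].
case: s hs => [|a s] hs //=; rewrite ltnS size_flatten.
have ha : size a <= m by apply: hs; rewrite inE eqxx.
suff : sumn (shape [seq rep q [seq b <- a :: s | x \notin b] | x <- a]) <= size a * Rb m q.
  move=> h; apply: leq_trans h _; exact: leq_mul.
have hsub : forall y b, b \in [seq b <- a :: s | y \notin b] -> b \in a :: s.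
  by move=> y b; rewrite mem_filter => /andP [].
have gen : forall l : seq T, sumn (shape [seq rep q [seq b <- a :: s | x \notin b] | x <- l]) <= size l * Rb m q.
  elim => [|x l IHl] //=; rewrite mulSn leq_add //.
  apply: IH => b hb; apply: hs; exact: (hsub x).
exact: gen.
Qed.

Definition avoid (B : {set T}) (P : seq T) := all (fun x => x \notin B) P.

Lemma rep_repr q (s : seq (seq T)) (B : {set T}) : #|B| <= q -> (exists2 a, a \in s & avoid B a) ->
  exists2 a, a \in rep q s & avoid B a.
Proof.
elim: q s B => [|q IH] s B hB [a0 ha0 hav].
  case: s ha0 => [|b s] // _; exists b; first by rewrite /= inE eqxx.
  move: hB; rewrite leqn0 cards_eq0 => /eqP ->; apply/allP => x _; by rewrite inE.
case: s ha0 => [|a s] // ha0.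
case hA: (avoid B a); first by exists a => //; rewrite /= inE eqxx.
move/negbT: hA; rewrite /avoid -has_predC => /hasP [x xa /negPn xB].
have x0 : x \notin a0 by apply/negP => xa0; move/allP: hav => /(_ x xa0); rewrite xB.
have h1 : #|B :\ x| <= q by move: hB; rewrite (cardsD1 x B) xB add1n ltnS.
have h2 : exists2 a1, a1 \in [seq b <- a :: s | x \notin b] & avoid (B :\ x) a1.
  exists a0; first by rewrite mem_filter x0.
  apply/allP => y ya0; rewrite !inE negb_and; move/allP: hav => /(_ y ya0) ->; by rewrite orbT.
have [a' ha' hav'] := IH _ _ h1 h2.
exists a'.
  rewrite /= inE; apply/orP; right; apply/flatten_mapP; by exists x.
apply/allP => y ya'; move: ha'; move/rep_sub; rewrite mem_filter => /andP [xa' _].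
have yx : y != x by apply/negP => /eqP yx; move: xa'; rewrite -yx ya'.
move/allP: hav' => /(_ y ya'); rewrite !inE negb_and yx /=.
by [].
Qed.
End Rep.

Lemma leq_expl a b e : a <= b -> a ^ e <= b ^ e.
Proof. case: e => [|e] h; first by []. by rewrite leq_exp2r. Qed.

Section Pad.
Variable X : Type.
Lemma padT_size m (s : seq X) : size (take m (map Some s ++ nseq m None)) == m.
Proof. by rewrite size_takel // size_cat size_nseq leq_addl. Qed.
Definition padT m (s : seq X) : m.-tuple (option X) := Tuple (padT_size m s).

Lemma pmap_Some (l : seq (option X)) (s' : seq X) :
  pmap id (map Some s' ++ l) = s' ++ pmap id l.
Proof. by elim: s' => //= a s' ->. Qed.

Lemma pmap_nseq j : pmap id (nseq j (@None X)) = [::].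
Proof. by elim: j. Qed.

Lemma padTK m (s : seq X) : size s <= m -> pmap id (tval (padT m s)) = s.
Proof.
move=> h /=; rewrite take_cat size_map ltnNge h /= pmap_Some ?take_nseq ?leq_subr //.
by rewrite pmap_nseq cats0.
Qed.
End Pad.

Section Alg.
Variables (n k0 g0 : nat).
Local Notation k := k0.+1.
Local Notation g := g0.+1.
Local Notation K := k.+1.

Record st := St { lev : nat -> 'I_g -> 'I_n -> seq (seq 'I_n); ans : option {set 'I_n} }.

Definition srcb (b : nat) (i : 'I_g) (v : 'I_n) := (v %/ g == b) && (v %% g == i).

Definition FF := Rb k k.

Definition fam0 b (i : 'I_g) (u : 'I_n) : seq (seq 'I_n) := if srcb b i u then [:: [:: u]] else [::].

Definition ext (L : 'I_n -> seq (seq 'I_n)) (a w : 'I_n) := [seq rcons P w | P <- L a & w \notin P].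

Definition upd (t : st) (ph : nat) (x y : 'I_n) (i : 'I_g) (w : 'I_n) :=
  rep k (lev t ph i w ++ (if w == y then ext (lev t ph.-1 i) x w else [::])
                     ++ (if w == x then ext (lev t ph.-1 i) y w else [::])).

Definition found (t : st) (x y : 'I_n) : option {set 'I_n} :=
  match [seq P <- flatten [seq lev t k0 i x | i <- enum 'I_g] | head x P == y] with
  | P :: _ => Some [set z in P]
  | [::] => None
  end.

Definition step (j : nat) (t : st) (e : edge n) : st :=
  let b := j %/ K in let ph := j %% K in
  if ph < k then
    St (fun r i w => if r == ph.+1 then [::] else if r == ph then
          (if ph == 0 then fam0 b i w else upd t ph e.1 e.2 i w) else lev t r i w) (ans t)
  else St (lev t) (match ans t with Some V => Some V | None =>
          match found t e.1 e.2 with Some V => Some V | None => found t e.2 e.1 end end).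

Definition init : st := St (fun _ _ _ => [::]) None.

Definition SizeInv (t : st) := forall r i u,
  [/\ size (lev t r i u) <= FF, (forall P, P \in lev t r i u -> size P <= r.+1)
    & (k <= r -> lev t r i u = [::])].

Lemma FF_gt0 : 0 < FF. Proof. exact: Rb_gt0. Qed.

Lemma SizeInv_init : SizeInv init.
Proof. by move=> r i u; split => //; exact: FF_gt0. Qed.

Lemma SizeInv_step j t e : SizeInv t -> SizeInv (step j t e).
Proof.
move=> hS; rewrite /step; case: ifP => hph; last by [].
move=> r i u /=.
case: eqP => [_|hr]; first by split => //; exact: FF_gt0.
case: eqP => [->|hr2]; last exact: hS.
case: eqP => [->|h0].
  rewrite /fam0; case: srcb; split => //=; try exact: FF_gt0.
  by move=> P; rewrite inE => /eqP ->.
have hall : forall P, P \in lev t (j %% K) i u ++ (if u == e.2 then ext (lev t (j %% K).-1 i) e.1 u else [::])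
                     ++ (if u == e.1 then ext (lev t (j %% K).-1 i) e.2 u else [::]) -> size P <= (j %% K).+1.
  move=> P; rewrite !mem_cat => /or3P [].
  - by have [_ h _] := hS (j %% K) i u; apply: h.
  - case: eqP => // _ /mapP [Q]; rewrite mem_filter => /andP [_ hQ] ->.
    have [_ h _] := hS (j %% K).-1 i e.1; rewrite size_rcons ltnS.
    by apply: leq_trans (h Q hQ) _; rewrite prednK // lt0n; apply/eqP.
  - case: eqP => // _ /mapP [Q]; rewrite mem_filter => /andP [_ hQ] ->.
    have [_ h _] := hS (j %% K).-1 i e.2; rewrite size_rcons ltnS.
    by apply: leq_trans (h Q hQ) _; rewrite prednK // lt0n; apply/eqP.
split.
- apply: rep_size => P /hall h; exact: leq_trans h hph.
- by move=> P /rep_sub /hall.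
- by rewrite leqNgt hph.
Qed.

Definition UT := ({ffun 'I_k * 'I_g * 'I_n -> FF.-tuple (option (k.-tuple (option 'I_n)))} * option {set 'I_n})%type.

Definition code (t : st) : UT :=
  ([ffun x : 'I_k * 'I_g * 'I_n => padT FF [seq padT k P | P <- lev t x.1.1 x.1.2 x.2]], ans t).

Definition uncode (c : UT) : st :=
  St (fun r i u => if r < k then [seq pmap id (tval P) | P <- pmap id (tval (c.1 (inord r, i, u)))] else [::]) c.2.

Lemma codeK t : SizeInv t -> uncode (code t) = t.
Proof.
case: t => lv a hS; rewrite /uncode /code /=; congr St.
apply: functional_extensionality => r; apply: functional_extensionality => i;
apply: functional_extensionality => u.
have [h1 h2 h3] := hS r i u; simpl in h1, h2, h3.
case: ltnP => hr; last by rewrite h3.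
rewrite ffunE /= inordK // padTK; last by rewrite size_map.
rewrite -map_comp; elim: (lv r i u) h2 => //= P l IH h; rewrite padTK.
  by rewrite IH // => Q hQ; apply: h; rewrite inE hQ orbT.
by apply: leq_trans (h P _) hr; rewrite inE eqxx.
Qed.

Definition Lg := (trunc_log 2 n).+1.
Definition SS := k * g * n * (FF * (k * Lg + 1)) + n.+1.

Lemma cardUT : #|{: UT}| <= 2 ^ SS.
Proof.
rewrite card_prod card_option card_setT card_ffun !card_prod !card_ord card_tuple card_option card_tuple card_option card_ord.
have hL : n.+1 <= 2 ^ Lg by exact: trunc_log_ltn.
have h1 : ((n.+1) ^ k).+1 <= 2 ^ (k * Lg + 1).
  rewrite expnD expn1 muln2 -addnn; have h0 : 0 < n.+1 ^ k by rewrite expn_gt0.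
  have : n.+1 ^ k <= 2 ^ (k * Lg) by rewrite mulnC expnM; apply: leq_expl.
  lia.
have h2 : (((n.+1) ^ k).+1 ^ FF) ^ (k * g * n) <= 2 ^ (k * g * n * (FF * (k * Lg + 1))).
  apply: (@leq_trans (((2 ^ (k * Lg + 1)) ^ FF) ^ (k * g * n))).
    apply: leq_expl; exact: leq_expl.
  rewrite -!expnM; apply: eq_leq; congr (_ ^ _); nia.
have h3 : (2 ^ n).+1 <= 2 ^ n.+1 by rewrite expnS; have := expn_gt0 2 n; lia.
rewrite /SS expnD; exact: leq_mul.
Qed.

Definition out (t : st) := ans t.

Lemma alg_exists p : exists A : stream_alg n p SS, forall s,
  run_alg A s = ans (foldl (fun t j => foldl (step j) t s) init (iota 0 p)).
Proof.
have := @encode_alg n p SS st UT code uncode SizeInv init step ans codeK SizeInv_init SizeInv_step cardUT.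
by [].
Qed.
End Alg.

Section Sound.
Variables (n k0 g0 : nat) (s : seq (edge n)).
Local Notation k := k0.+1.
Local Notation g := g0.+1.
Local Notation K := k.+1.
Local Notation st := (st n g0).

Definition spath (r : nat) (u : 'I_n) (P : seq 'I_n) :=
  match P with v :: rest => [&& path (adj s) v rest, uniq P, last v rest == u & size rest == r]
  | [::] => false end.

Lemma spath_rcons r x y P : spath r x P -> y \notin P -> adj s x y -> spath r.+1 y (rcons P y).
Proof.
case: P => [|v rest] //= /and4P [hp hu /eqP hl /eqP hs] hy hxy.
rewrite rcons_path hp hl hxy last_rcons size_rcons hs eqxx /=.
move: hy; rewrite rcons_uniq mem_rcons !inE negb_or eqxx andbT; case/andP => /negbTE hvy hyr; rewrite eq_sym hvy hyr /=. exact: hu. Qed.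

Lemma adj_sym x y : adj s x y = adj s y x.
Proof. by rewrite /adj orbC. Qed.

Lemma path_cycle (P : seq 'I_n) x y : spath k0 x P -> head x P = y -> adj s x y ->
  exists f : 'I_k -> 'I_n, cycle_copy s f /\ [set z in P] = f @: setT.
Proof.
case: P => [|v rest] //= /and4P [hp hu /eqP hl /eqP hs] hv hxy; subst y.
exists (fun i => nth x (v :: rest) i); split; last first.
  apply/setP => z; rewrite inE; apply/idP/imsetP.
    move=> hz; exists (inord (index z (v :: rest))) => //.
    rewrite inordK ?nth_index //; by rewrite -hs -[(size rest).+1]/(size (v :: rest)) index_mem.
  by case=> i _ ->; apply: mem_nth => /=; rewrite hs.
split.
  move=> i j /eqP; rewrite nth_uniq //= ?hs // => /eqP; exact: val_inj.
move=> i j hj.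
have hi : i < k := ltn_ord i.
case: (ltngtP i k0) => him.
- have hj' : val j = i.+1 by rewrite hj modn_small.
  rewrite hj' /=; move/(pathP x): hp => /(_ i); rewrite hs => /(_ him).
  by [].
- by move: hi; rewrite ltnS leqNgt him.
- have hj' : val j = 0 by move: hj; rewrite /= him modnn.
  rewrite hj' /= him.
  have := nth_last x (v :: rest); rewrite /= hs hl => ->; exact: hxy.
Qed.

Definition SI (t : st) :=
  (forall r i u P, P \in lev t r i u -> spath r u P) /\
  (forall V, ans t = Some V -> exists f : 'I_k -> 'I_n, cycle_copy s f /\ V = f @: setT).

Lemma SI_init : SI (init n g0).
Proof. by split. Qed.

Lemma found_sound (t : st) x y V : SI t -> adj s x y -> found k0 t x y = Some V ->
  exists f : 'I_k -> 'I_n, cycle_copy s f /\ V = f @: setT.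
Proof.
move=> [h1 _] hxy; rewrite /found.
case hF: [seq P <- _ | _] => [|P l] //= [<-].
have : P \in [seq P <- flatten [seq lev t k0 i x | i <- enum 'I_g] | head x P == y] by rewrite hF inE eqxx.
rewrite mem_filter => /andP [/eqP hh /flatten_mapP [i _ hP]].
apply: path_cycle hh hxy; exact: h1 hP.
Qed.

Lemma SI_step j (t : st) e : e \in s -> SI t -> SI (step k0 j t e).
Proof.
move=> he [h1 h2]; have hxy : adj s e.1 e.2 by rewrite /adj -surjective_pairing he.
rewrite /step; case: ifP => hph; split => //=.
- move=> r i u P; case: eqP => // _; case: eqP => [->|_]; last exact: h1.
  case: eqP => [->|h0].
    by rewrite /fam0; case: srcb => //; rewrite inE => /eqP ->; rewrite /= eqxx.
  move/rep_sub; rewrite !mem_cat => /or3P [].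
  + exact: h1.
  + case: eqP => // -> /mapP [Q]; rewrite mem_filter => /andP [hy hQ] ->.
    have := spath_rcons (h1 _ _ _ _ hQ) hy hxy; rewrite prednK //; by rewrite lt0n; apply/eqP.
  + case: eqP => // -> /mapP [Q]; rewrite mem_filter => /andP [hy hQ] ->.
    rewrite adj_sym in hxy.
    have := spath_rcons (h1 _ _ _ _ hQ) hy hxy; rewrite prednK //; by rewrite lt0n; apply/eqP.
- move=> V; case ha: (ans t) => [W|]; first by move=> [<-]; exact: h2.
  case hf: (found k0 t e.1 e.2) => [W|]; first by move=> [<-]; exact: found_sound hf.
  move=> hf2; apply: found_sound hf2 => //; by rewrite adj_sym.
Qed.

Lemma SI_run p : SI (foldl (fun t j => foldl (step k0 j) t s) (init n g0) (iota 0 p)).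
Proof.
have hp : forall j t, SI t -> SI (foldl (step k0 j) t s).
  move=> j t; have : forall e, e \in s -> e \in s by [].
  elim: {1 3}s t => //= e l IH t hl ht; apply: IH.
    by move=> e' he'; apply: hl; rewrite inE he' orbT.
  apply: SI_step => //; apply: hl; by rewrite inE eqxx.
elim: (iota 0 p) (init n g0) SI_init => //= a l IH t ht; apply: IH; exact: hp.
Qed.
End Sound.

Section Comp.
Variables (n k0 g0 : nat) (s : seq (edge n)).
Local Notation k := k0.+1.
Local Notation g := g0.+1.
Local Notation K := k.+1.
Local Notation st := (st n g0).
Local Notation Lv := ('I_g -> 'I_n -> seq (seq 'I_n)).

Definition pass j (t : st) := foldl (step k0 j) t s.

Definition hd_ok b (i : 'I_g) (P : seq 'I_n) :=
  match P with v :: _ => srcb b i v | [::] => false end.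

Definition gsrc b i r u P := spath s r u P && hd_ok b i P.

Definition Heads (L : Lv) b := forall i u P, P \in L i u -> hd_ok b i P.

Definition Repr (L : Lv) r b := forall i u P, gsrc b i r u P ->
  forall B : {set 'I_n}, #|B| + r < k -> avoid B P -> exists2 P', P' \in L i u & avoid B P'.

Lemma lev_step_other j (t : st) e r i u :
  (j %% K < k -> r != j %% K /\ r != (j %% K).+1) -> lev (step k0 j t e) r i u = lev t r i u.
Proof.
move=> H; rewrite /step; case: ifP => h //=.
have [h1 h2] := H h; by rewrite (negbTE h1) (negbTE h2).
Qed.

Lemma lev_pass_other j (t : st) r i u :
  (j %% K < k -> r != j %% K /\ r != (j %% K).+1) -> lev (pass j t) r i u = lev t r i u.
Proof.
move=> H; rewrite /pass; elim: s t => //= e l IH t; rewrite IH; exact: lev_step_other.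
Qed.

Lemma lev_pass_reset j (t : st) i u : s != [::] -> j %% K < k -> lev (pass j t) (j %% K).+1 i u = [::].
Proof.
move=> hs hk; rewrite /pass; case: s hs => // e l _ /=.
have h1 : forall t', lev (step k0 j t' e) (j %% K).+1 i u = [::] by move=> t'; rewrite /step hk /= eqxx.
elim: l (step k0 j t e) (h1 t) => //= e' l IH t' ht'; apply: IH.
by rewrite /step hk /= eqxx.
Qed.

Lemma lev_pass0 j (t : st) i u : s != [::] -> j %% K = 0 -> lev (pass j t) 0 i u = fam0 (j %/ K) i u.
Proof.
move=> hs hk; rewrite /pass; case: s hs => // e l _ /=.
have h1 : forall t', lev (step k0 j t' e) 0 i u = fam0 (j %/ K) i u by move=> t'; rewrite /step hk /=.
elim: l (step k0 j t e) (h1 t) => //= e' l IH t' ht'; apply: IH.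
by rewrite /step hk /=.
Qed.

Lemma Repr_fam0 b : Repr (fun i u => fam0 b i u) 0 b.
Proof.
move=> i u P; rewrite /gsrc /spath /hd_ok; case: P => [|v [|w rest]] //=.
  case/andP => /andP [/eqP hv _] hsrc B _ hav; subst v.
  by exists [:: u]; rewrite // /fam0 hsrc inE.
by case/andP => /and4P [_ _ _ /eqP].
Qed.

Lemma Heads_fam0 b : Heads (fun i u => fam0 b i u) b.
Proof. by move=> i u P; rewrite /fam0; case: ifP => // h; rewrite inE => /eqP ->. Qed.

Definition PI (L1 : Lv) ph b (l0 : seq (edge n)) (L : Lv) :=
  forall i w P0 a, gsrc b i ph.-1 a P0 -> w \notin P0 -> ((a, w) \in l0) || ((w, a) \in l0) ->
  forall B : {set 'I_n}, #|B| + ph < k -> avoid B (rcons P0 w) ->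
  exists2 P', P' \in L i w & avoid B P'.

Lemma avoid_rcons (B : {set 'I_n}) P w : avoid B (rcons P w) = avoid B P && (w \notin B).
Proof. by rewrite /avoid all_rcons andbC. Qed.

Lemma ext_repr (L1 : Lv) ph b i a w P0 (B : {set 'I_n}) : 0 < ph -> Repr L1 ph.-1 b ->
  gsrc b i ph.-1 a P0 -> w \notin P0 -> #|B| + ph < k -> avoid B (rcons P0 w) ->
  exists2 P', P' \in ext (L1 i) a w & avoid B P'.
Proof.
move=> hph hR hg hw hB; rewrite avoid_rcons => /andP [hav hwB].
have c1 : #|w |: B| + ph.-1 < k.
  rewrite cardsU1 hwB; move: hB hph; clear; case: ph => //= ph hB1 _. rewrite add1n addSn; rewrite addnS in hB1; exact: hB1.
have c2 : avoid (w |: B) P0.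
  apply/allP => x hx; rewrite !inE negb_or; apply/andP; split.
    by apply/negP => /eqP hxw; move: hw; rewrite -hxw hx.
  by move/allP: hav => /(_ x hx).
have [P1 hP1 hav1] := hR i a P0 hg (w |: B) c1 c2.
have hw1 : w \notin P1 by apply/negP => hw1; move/allP: hav1 => /(_ w hw1); rewrite !inE eqxx.
exists (rcons P1 w).
  by apply/mapP; exists P1 => //; rewrite mem_filter hw1.
rewrite avoid_rcons hwB andbT; apply/allP => x hx.
by move/allP: hav1 => /(_ x hx); rewrite !inE negb_or => /andP [].
Qed.

Lemma pass_ext j (t : st) ph b : j %% K = ph -> j %/ K = b ->
  0 < ph -> ph < k -> Repr (lev t ph.-1) ph.-1 b -> Heads (lev t ph.-1) b ->
  Heads (lev t ph) b ->
  Repr (lev (pass j t) ph) ph b /\ Heads (lev (pass j t) ph) b.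
Proof.
move=> eph eb h0 hk hR hH hH0.
have n1 : ph.-1 != ph by lia.
have n2 : ph.-1 != ph.+1 by lia.
have n3 : ph != ph.+1 by lia.
have n4 : ph != 0 by lia.
have gen : forall l l0 (t' : st), (forall i u, lev t' ph.-1 i u = lev t ph.-1 i u) ->
    PI (lev t ph.-1) ph b l0 (lev t' ph) -> Heads (lev t' ph) b ->
    (forall i u, lev (foldl (step k0 j) t' l) ph.-1 i u = lev t ph.-1 i u) /\
    PI (lev t ph.-1) ph b (l0 ++ l) (lev (foldl (step k0 j) t' l) ph) /\
    Heads (lev (foldl (step k0 j) t' l) ph) b.
  elim => [|e l IH] l0 t' hprev hPI hHd /=; first by rewrite cats0.
  rewrite -cat_rcons; apply: IH.
  - move=> i u; rewrite lev_step_other ?hprev // => _; rewrite eph; by split.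
  - have hnew : forall i u, lev (step k0 j t' e) ph i u = upd k0 t' ph e.1 e.2 i u.
      move=> i u; rewrite /step eph eb hk /= (negbTE n3) eqxx (negbTE n4) //.
    move=> i w P0 a hg hw; rewrite !mem_rcons !inE => hin B hB hav.
    rewrite hnew /upd; apply: rep_repr; first by apply: (leq_trans _ (ltnW hB)); exact: leq_addr.
    move: hin => /orP [/orP [he|hl0] | /orP [he|hl0]].
    + have [P' hP' hav'] := ext_repr h0 hR hg hw hB hav.
      exists P' => //; rewrite !mem_cat; apply/or3P; apply: Or32.
      move/eqP: he => he; rewrite -he /= eqxx; rewrite /ext hprev; exact: hP'.
    + have [P' hP' hav'] : exists2 P', P' \in lev t' ph i w & avoid B P'.
        by apply: (hPI i w P0 a hg hw) => //; rewrite hl0.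
      by exists P' => //; rewrite mem_cat hP'.
    + have [P' hP' hav'] := ext_repr h0 hR hg hw hB hav.
      exists P' => //; rewrite !mem_cat; apply/or3P; apply: Or33.
      move/eqP: he => he; rewrite -he /= eqxx; rewrite /ext hprev; exact: hP'.
    + have [P' hP' hav'] : exists2 P', P' \in lev t' ph i w & avoid B P'.
        by apply: (hPI i w P0 a hg hw) => //; rewrite hl0 orbT.
      by exists P' => //; rewrite mem_cat hP'.
  - move=> i u P; rewrite /step eph eb hk /= (negbTE n3) eqxx (negbTE n4) /upd => /rep_sub.
    rewrite !mem_cat => /or3P [].
    + exact: hHd.
    + case: eqP => // _ /mapP [Q]; rewrite mem_filter hprev => /andP [_ /hH].
      by case: Q => // v Q /= h ->.
    + case: eqP => // _ /mapP [Q]; rewrite mem_filter hprev => /andP [_ /hH].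
      by case: Q => // v Q /= h ->.
have hPI0 : PI (lev t ph.-1) ph b [::] (lev t ph) by [].
have [_ [hPI hHd]] := gen s [::] t (fun _ _ => erefl) hPI0 hH0.
split => // i u P /andP [hsp hhd] B hB hav.
case: P hsp hhd hav => [|v rest] //= /and4P [hp hu /eqP hl /eqP hs] hhd hav.
case/lastP: rest hp hu hl hs hav => [|rest0 w] hp hu hl hs hav.
  by move: h0; rewrite -hs.
move: hp; rewrite rcons_path => /andP [hp ha].
move: hu; rewrite mem_rcons inE negb_or rcons_uniq => /andP [/andP [hvw hvr] /andP [hwr hur]].
have hP0 : gsrc b i ph.-1 (last v rest0) (v :: rest0).
  rewrite /gsrc /spath /hd_ok /= hp hvr hur eqxx /= -hs size_rcons /= eqxx.
  exact: hhd.
have hw : w \notin v :: rest0 by rewrite inE negb_or eq_sym hvw hwr.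
move: hl; rewrite last_rcons => hwu; subst w.
apply: (hPI i u (v :: rest0) (last v rest0) hP0 hw) => //.
Qed.
End Comp.

Section Comp2.
Variables (n k0 g0 : nat) (s : seq (edge n)).
Local Notation k := k0.+1.
Local Notation g := g0.+1.
Local Notation K := k.+1.
Local Notation st := (st n g0).
Local Notation Lv := ('I_g -> 'I_n -> seq (seq 'I_n)).
Local Notation pass := (pass k0 s).

Lemma ans_step_mono j (t : st) e : ans t != None -> ans (step k0 j t e) != None.
Proof. by rewrite /step; case: ifP => _ //=; case: (ans t). Qed.

Lemma ans_fold_mono j (t : st) l : ans t != None -> ans (foldl (step k0 j) t l) != None.
Proof. elim: l t => //= e l IH t h; apply: IH; exact: ans_step_mono. Qed.

Lemma ans_passes_mono (t : st) l : ans t != None -> ans (foldl (fun t j => pass j t) t l) != None.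
Proof. elim: l t => //= j l IH t h; apply: IH; exact: ans_fold_mono. Qed.

Lemma Repr_ext (L L' : Lv) r b : (forall i u, L i u = L' i u) -> Repr k0 s L r b -> Repr k0 s L' r b.
Proof. move=> h hR i u P hg B hB hav; rewrite -h; exact: (hR i u P hg B hB hav). Qed.

Lemma Heads_ext (L L' : Lv) b : (forall i u, L i u = L' i u) -> Heads L b -> Heads L' b.
Proof. move=> h hH i u P; rewrite -h; exact: (hH i u P). Qed.

Lemma found_some (t : st) i x y P : P \in lev t k0 i x -> head x P = y -> found k0 t x y != None.
Proof.
move=> hP hh; rewrite /found.
have : P \in [seq P <- flatten [seq lev t k0 i x | i <- enum 'I_g] | head x P == y].
  rewrite mem_filter hh eqxx /=; apply/flatten_mapP; exists i => //; by rewrite mem_enum.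
by case: [seq _ <- _ | _].
Qed.

Lemma check_pass j (t : st) i x y P : j %% K = k -> P \in lev t k0 i x -> head x P = y ->
  ((x, y) \in s) || ((y, x) \in s) -> ans (pass j t) != None.
Proof.
move=> hj hP hh he; rewrite /Submission.pass.
have hs : forall (t' : st) e, lev (step k0 j t' e) = lev t' by move=> t' e; rewrite /step hj ltnn.
have gen : forall l (t' : st), lev t' = lev t -> ((x, y) \in l) || ((y, x) \in l) ->
    ans (foldl (step k0 j) t' l) != None.
  elim => [|e l IH] t' hl //= hin.
  case: (boolP (((x, y) \in l) || ((y, x) \in l))) => hl'.
    by apply: IH => //; rewrite hs.
  apply: ans_fold_mono; rewrite /step hj ltnn /=.
  have hin' : ((x, y) == e) || ((y, x) == e).
    move: hin hl'; rewrite !inE.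
    by case: ((x, y) == e); case: ((y, x) == e); case: ((x, y) \in l); case: ((y, x) \in l).
  have hP' : P \in lev t' k0 i x by rewrite hl.
  have := found_some hP' hh.
  case: (ans t') => // ; case/orP: hin' => /eqP <- /=.
    by case: found.
  by case: (found k0 t' y x) => //; case: found.
exact: gen.
Qed.

Lemma divmod_b b r : r < K -> (b * K + r) %/ K = b /\ (b * K + r) %% K = r.
Proof. move=> h; rewrite divnMDl // modnMDl divn_small // modn_small //; by rewrite addn0. Qed.

Definition runb (t : st) b r := foldl (fun t j => pass j t) t (iota (b * K) r).
Arguments runb : simpl never.

Lemma runbS t b r : runb t b r.+1 = pass (b * K + r) (runb t b r).
Proof. by rewrite /runb -[r.+1]addn1 iotaD foldl_cat. Qed.

Lemma batch_levels (t : st) b r : s != [::] -> r <= k0 ->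
  [/\ Repr k0 s (lev (runb t b r.+1) r) r b, Heads (lev (runb t b r.+1) r) b
    & forall i u, lev (runb t b r.+1) r.+1 i u = [::]].
Proof.
move=> hs; elim: r => [|r IH] hr.
  have [hd hm] := divmod_b b (ltn0Sn k); rewrite addn0 in hd hm.
  rewrite runbS addn0 /runb /=.
  split.
  - apply: (@Repr_ext (fun i u => fam0 b i u)); last exact: Repr_fam0.
    by move=> i u; rewrite lev_pass0 // hd.
  - apply: (@Heads_ext (fun i u => fam0 b i u)); last exact: Heads_fam0.
    by move=> i u; rewrite lev_pass0 // hd.
  - move=> i u; have := @lev_pass_reset n k0 g0 s (b * K) t i u hs; rewrite hm; by apply.
have [h1 h2 h3] := IH (ltnW hr).
rewrite (runbS t b r.+1).
set tr := runb t b r.+1.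
have hK : r.+1 < K by lia.
have [hd hm] := divmod_b b hK.
have hH0 : Heads (lev tr r.+1) b.
  by apply: (@Heads_ext (fun _ _ => [::])) => // i u; rewrite h3.
have [R2 H2] := pass_ext (j := b * K + r.+1) (t := tr) hm hd (ltn0Sn r) hr h1 h2 hH0.
split => // i u; have := @lev_pass_reset n k0 g0 s (b * K + r.+1) tr i u hs; rewrite hm; apply; lia.
Qed.
End Comp2.

Section Final.
Variables (n k0 g0 : nat) (s : seq (edge n)).
Local Notation k := k0.+1.
Local Notation g := g0.+1.
Local Notation K := k.+1.
Local Notation st := (st n g0).

Lemma spath_mkseq (h : nat -> 'I_n) :
  (forall m, m < k0 -> adj s (h m) (h m.+1)) -> {in gtn k &, injective h} ->
  forall m, m < k -> spath s m (h m) (mkseq h m.+1).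
Proof.
move=> ha hi; elim => [|m IH] hm; first by rewrite /spath /= eqxx.
rewrite mkseqS; apply: spath_rcons; first by apply: IH; lia.
  apply/negP; rewrite /mkseq => /mapP [m' hm' he].
  move: hm'; rewrite mem_iota add0n => hm'.
  have := hi m.+1 m'; rewrite !inE => /(_ hm (ltn_trans hm' hm) he) hmm; lia.
apply: ha; lia.
Qed.

Lemma srcb_inj b (i : 'I_g) (v w : 'I_n) : srcb b i v -> srcb b i w -> v = w.
Proof.
rewrite /srcb => /andP [/eqP h1 /eqP h2] /andP [/eqP h3 /eqP h4]; apply: val_inj => /=.
by rewrite (divn_eq v g) (divn_eq w g) h1 h2 h3 h4.
Qed.

Lemma cycle_detect (t : st) (f : 'I_k -> 'I_n) : s != [::] -> cycle_copy s f ->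
  ans (runb k0 s t ((f (inord 0)) %/ g) K) != None.
Proof.
move=> hs [finj fadj].
set h := fun m => f (inord m).
set b := (h 0) %/ g.
have hadj : forall m, m < k0 -> adj s (h m) (h m.+1).
  move=> m hm; apply: fadj; rewrite /= !inordK ?modn_small //; lia.
have hinj : {in gtn k &, injective h}.
  move=> a c; rewrite !inE => ha hc /finj /(congr1 val); rewrite /= !inordK //.
have hsp := spath_mkseq hadj hinj (ltnSn k0).
set i : 'I_g := inord ((h 0) %% g).
have hsrc : srcb b i (h 0) by rewrite /srcb eqxx /= inordK ?eqxx // ltn_pmod.
have hg : gsrc s b i k0 (h k0) (mkseq h k).
  by rewrite /gsrc hsp /= /hd_ok /mkseq /=.
have [R H hz] := batch_levels t b hs (leqnn k0).
have c1 : #|@set0 'I_n| + k0 < k by rewrite cards0.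
have c2 : avoid set0 (mkseq h k) by rewrite /avoid; apply/allP => x _; rewrite inE.
have [P' hP' _] := R i (h k0) (mkseq h k) hg set0 c1 c2.
have := H i (h k0) P' hP'; case: P' hP' => [|v P'] // hP' hv.
have ev : v = h 0 := srcb_inj hv hsrc.
have [hd hm] := divmod_b b (ltnSn k).
rewrite runbS; apply: (check_pass (i := i) (x := h k0) (y := h 0) (P := v :: P')) => //.
have := fadj (inord k0) (inord 0); rewrite /= !inordK // modnn => /(_ erefl).
by rewrite /adj orbC.
Qed.

Lemma complete p : (forall v : 'I_n, (v %/ g).+1 * K <= p) -> contains_cycle k s ->
  ans (foldl (fun t j => foldl (step k0 j) t s) (init n g0) (iota 0 p)) != None.
Proof.
move=> hp [f hf].
have hs : s != [::].
  case: hf => _ ha; have := ha ord0 (inord (1 %% k)) (inordK (ltn_pmod _ (ltn0Sn k0))).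
  by case: (s).
set b := (f (inord 0)) %/ g.
have hb := hp (f (inord 0)).
have ep : p = b * K + (K + (p - (b * K + K))) by rewrite /b; nia.
rewrite ep !iotaD !foldl_cat add0n.
apply: (@ans_passes_mono n k0 g0 s); exact: cycle_detect.
Qed.

End Final.

Lemma batch_solves n k0 g0 p : (forall v : 'I_n, (v %/ g0.+1).+1 * k0.+2 <= p) ->
  exists A : stream_alg n p (SS n k0 g0), solves_sub_cycle k0.+1 A.
Proof.
move=> hp; have [A HA] := alg_exists n k0 g0 p.
exists A => s' vs; rewrite HA /sub_cycle_correct.
case E: (ans _) => [V|].
  have [_ h2] := SI_run k0 g0 s' p; exact: h2.
move=> hc; have := @complete n k0 g0 s' p hp hc; by rewrite E.
Qed.

Theorem proposition15 (l : nat) (hl : 1 <= l) (p : nat -> nat)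
  (hp_pos : forall n, 0 < p n)
  (hp_lin : exists C N0, forall n, N0 <= n -> p n <= C * n) :
  exists c k N, forall n, N <= n ->
    exists S, S * p n <= c * n ^ 2 * (trunc_log 2 n).+1 ^ k /\
              Dp_sub_cycle_le (2 * l).+1 n (p n) S.
Proof.
case: hp_lin => C [N0 hC].
set k0 := 2 * l.
set K := k0.+2.
set F := FF k0.
exists (K + k0.+1 * F * k0.+2 * (2 * K + C) + 2 * C), 1, (maxn N0 1) => n hn.
have hn0 : 0 < n by move: hn; rewrite geq_max => /andP [].
have hPC : p n <= C * n by apply: hC; move: hn; rewrite geq_max => /andP [].
set P := p n.
set L := (trunc_log 2 n).+1.
have hL : 0 < L by [].
case: (ltnP P K) => hPK.
  exists (n * n); split; last first.
    by apply: store_correct; exact: hp_pos.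
  rewrite expn1 /L -/P.
  have h1 : n * n * P <= K * (n ^ 2) by rewrite mulnC mulnn; apply: leq_mul => //; exact: ltnW.
  apply: leq_trans h1 _; rewrite -mulnA; apply: leq_mul; first by rewrite -addnA leq_addr.
  exact: leq_pmulr.
set p' := P %/ K.
have hp' : 0 < p' by rewrite /p' divn_gt0.
set q := n %/ p'.
exists (SS n k0 q); split; last first.
  rewrite /Dp_sub_cycle_le.
  apply: (@batch_solves n k0 q P) => v.
  have hv : v %/ q.+1 < p'.
    rewrite ltn_divLR //; apply: (leq_trans (ltn_ord v)); rewrite mulnC; exact: ltnW (ltn_ceil n hp').
  apply: leq_trans (leq_divM P K); exact: leq_mul.
have hq : q * p' <= n by exact: leq_divM.
have hP2 : P <= 2 * K * p'.
  have := divn_eq P K; have := ltn_pmod P (ltn0Sn k0.+1); rewrite -/K -/p'; nia.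
have hgP : q.+1 * P <= (2 * K + C) * n by nia.
rewrite expn1 /SS -/L.
have e1 : (k0.+1 * q.+1 * n * (FF k0 * (k0.+1 * L + 1)) + n.+1) * P =
   k0.+1 * n * F * (k0.+1 * L + 1) * (q.+1 * P) + n.+1 * P by rewrite /F; ring.
rewrite e1.
have b1 : k0.+1 * n * F * (k0.+1 * L + 1) * (q.+1 * P) <= k0.+1 * n * F * (k0.+2 * L) * ((2 * K + C) * n).
  apply: leq_mul => //; apply: leq_mul => //; nia.
have b2 : n.+1 * P <= (2 * n) * (C * n) by apply: leq_mul => //; lia.
apply: leq_trans (leq_add b1 b2) _.
have e2 : (K + k0.+1 * F * k0.+2 * (2 * K + C) + 2 * C) * n ^ 2 * L =
   K * n ^ 2 * L + (k0.+1 * n * F * (k0.+2 * L) * ((2 * K + C) * n)) + 2 * C * n ^ 2 * L by ring.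
rewrite e2.
apply: (@leq_trans (k0.+1 * n * F * (k0.+2 * L) * ((2 * K + C) * n) + 2 * C * n ^ 2 * L)).
  apply: leq_add => //; rewrite -mulnn; apply: leq_trans (leq_pmulr _ hL); nia.
by rewrite leq_add2r leq_addl.
Qed.
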